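(* Let $S$ be a state of a $d$-dimensional Hegselmann–Krause system with social network $G=(V,E)$ and confidence bound $\varepsilon>0$, and let $\lambda$ be the length of a longest edge of the influence network. Then $$\sum_{v\in V}|N_v|\,\|m_v\|_2\ \ge\ 2\lambda.$$
   Context: A $d$-dimensional Hegselmann–Krause system has a finite undirected graph $G=(V,E)$ (social network), a confidence bound $\varepsilon>0$, and a state given by positions $x_v\in\mathbb{R}^d$. In a state, $N_v=\{u:\{u,v\}\in E,\ \|x_u-x_v\|_2\le\varepsilon\}\cup\{v\}$ is the influencing neighborhood of $v$, $m_v=\frac{1}{|N_v|}\sum_{u\in N_v}(x_u-x_v)$ is its movement, the influence network is $(V,E_I)$ with $E_I=\{\{u,v\}\in E:\|x_u-x_v\|_2\le\varepsilon\}$, and the length of an edge $\{u,v\}$ is $\|x_u-x_v\|_2$. *)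

(* Defs.v *)
From HB Require Import structures.
From mathcomp Require Import all_boot all_order all_algebra.
Set Implicit Arguments. Unset Strict Implicit. Unset Printing Implicit Defensive.
Import Order.TTheory GRing.Theory Num.Theory.
Local Open Scope ring_scope.

(* The social network is a
   finite simple undirected graph given by a symmetric irreflexive relation
   [e] on a finite vertex type [V]. *)

Definition norm2 (R : rcfType) (d : nat) (y : 'rV[R]_d) : R :=
  Num.sqrt (\sum_(i < d) y 0 i ^+ 2).

Definition dist2 (R : rcfType) (d : nat) (y z : 'rV[R]_d) : R := norm2 (y - z).

Definition infl_edge (R : rcfType) (d : nat) (V : finType) (e : rel V)
  (eps : R) (x : V -> 'rV[R]_d) (u v : V) : bool :=
  e u v && (dist2 (x u) (x v) <= eps).

Definition nbhd (R : rcfType) (d : nat) (V : finType) (e : rel V)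
  (eps : R) (x : V -> 'rV[R]_d) (v : V) : {set V} :=
  [set u | infl_edge e eps x u v || (u == v)].

Definition movement (R : rcfType) (d : nat) (V : finType) (e : rel V)
  (eps : R) (x : V -> 'rV[R]_d) (v : V) : 'rV[R]_d :=
  (#|nbhd e eps x v|%:R)^-1 *: \sum_(u in nbhd e eps x v) (x u - x v).

(* length of a longest edge of the influence network (0 if it has no edge) *)
Definition longest_infl_edge (R : rcfType) (d : nat) (V : finType) (e : rel V)
  (eps : R) (x : V -> 'rV[R]_d) : R :=
  \big[Num.max/0]_(p : V * V | infl_edge e eps x p.1 p.2) dist2 (x p.1) (x p.2).

(* Main.v *)
Require Import Defs.
From HB Require Import structures.
From mathcomp Require Import all_boot all_order all_algebra.
From mathcomp Require Import ring lra.
Import Order.TTheory GRing.Theory Num.Theory.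
Local Open Scope ring_scope.

Set Implicit Arguments.
Section Aux.
Variable R : rcfType.

Definition dotp (d : nat) (y w : 'rV[R]_d) : R := \sum_(i < d) y 0 i * w 0 i.

Lemma sumsq_ge0 d (y : 'rV[R]_d) : 0 <= \sum_(i < d) y 0 i ^+ 2.
Proof. by apply: sumr_ge0 => i _; rewrite sqr_ge0. Qed.

Lemma norm2_sqr d (y : 'rV[R]_d) : norm2 y ^+ 2 = \sum_(i < d) y 0 i ^+ 2.
Proof. by rewrite /norm2 sqr_sqrtr // sumsq_ge0. Qed.

Lemma norm2_ge0 d (y : 'rV[R]_d) : 0 <= norm2 y.
Proof. exact: sqrtr_ge0. Qed.

Lemma norm2_scale d (c : R) (y : 'rV[R]_d) : norm2 (c *: y) = `|c| * norm2 y.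
Proof.
rewrite /norm2 (eq_bigr (fun i => c ^+ 2 * y 0 i ^+ 2)); last first.
  by move=> i _; rewrite mxE exprMn.
by rewrite -mulr_sumr sqrtrM ?sqr_ge0 // sqrtr_sqr.
Qed.

Lemma norm2N d (y : 'rV[R]_d) : norm2 (- y) = norm2 y.
Proof. by rewrite -scaleN1r norm2_scale normrN normr1 mul1r. Qed.

Lemma dist2C d (y z : 'rV[R]_d) : dist2 y z = dist2 z y.
Proof. by rewrite /dist2 -opprB norm2N. Qed.

Lemma CS d (y w : 'rV[R]_d) : `|dotp y w| <= norm2 y * norm2 w.
Proof.
set A := \sum_(i < d) y 0 i ^+ 2.
set B := \sum_(i < d) w 0 i ^+ 2.
set C := dotp y w.
have A0 : 0 <= A := sumsq_ge0 y.
have B0 : 0 <= B := sumsq_ge0 w.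
suff H : C ^+ 2 <= A * B.
  rewrite -(sqrtr_sqr C) /norm2 -/A -/B -sqrtrM //.
  by rewrite ler_sqrt // mulr_ge0.
have [Bz|Bnz] := eqVneq B 0.
  have wz : forall i, w 0 i = 0.
    move=> i; apply/eqP; rewrite -sqrf_eq0; apply/eqP.
    by move/psumr_eq0P: Bz => ->// j _; rewrite sqr_ge0.
  rewrite Bz mulr0 /C /dotp big1 ?expr0n //= => i _; by rewrite wz mulr0.
have Bp : 0 < B by rewrite lt_def Bnz B0.
have key : \sum_(i < d) (B * y 0 i - C * w 0 i) ^+ 2 = B * (A * B - C ^+ 2).
  rewrite (eq_bigr (fun i => B ^+ 2 * y 0 i ^+ 2 - (2 * B * C) * (y 0 i * w 0 i) + C ^+ 2 * w 0 i ^+ 2)); last by move=> i _; ring.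
  rewrite big_split sumrB /= -!mulr_sumr -/A -/B.
  have -> : \sum_(i < d) y 0 i * w 0 i = C by [].
  ring.
have : 0 <= B * (A * B - C ^+ 2).
  by rewrite -key; apply: sumr_ge0 => i _; rewrite sqr_ge0.
by rewrite pmulr_rge0 // subr_ge0.
Qed.

Lemma longest_cases d (V : finType) (e : rel V) eps (x : V -> 'rV[R]_d) :
  longest_infl_edge e eps x = 0 \/ exists a b, infl_edge e eps x a b /\ longest_infl_edge e eps x = dist2 (x a) (x b).
Proof.
rewrite /longest_infl_edge.
apply: (big_ind (fun y => y = 0 \/ exists a b, infl_edge e eps x a b /\ y = dist2 (x a) (x b))).
- by left.
- move=> y z Hy Hz /=. rewrite /Num.max. by case: leP.
- move=> [a b] /= H; right; by exists a, b.
Qed.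

Lemma antisym_zero (V : finType) (P : pred V) (A : rel V) (Asym : symmetric A) (f : V -> R) :
  \sum_(v | P v) \sum_(u | A u v && P u) (f u - f v) = 0.
Proof.
set X := LHS.
have E : X = \sum_v \sum_u (if P v && (A u v && P u) then f u - f v else 0).
  rewrite /X big_mkcond /=; apply: eq_bigr => v _.
  case: (P v) => /=; first by rewrite big_mkcond.
  by rewrite big1.
have : X = - X.
  rewrite {1}E exchange_big /= E -sumrN. apply: eq_bigr => v _.
  rewrite -sumrN; apply: eq_bigr => u _.
  rewrite (Asym v u); case: (P u); case: (P v); case: (A u v) => //=;
  rewrite ?oppr0 // opprB //.
rewrite -/X => h; lra.
Qed.

Lemma cut (V : finType) (A : rel V) (Asym : symmetric A) (f : V -> R) (t : R) a b :
  f a <= t -> t < f b -> A b a ->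
  f b - f a <= \sum_(v | f v <= t) \sum_(u | A u v) (f u - f v).
Proof.
move=> ha hb hab.
have sp : forall v, \sum_(u | A u v) (f u - f v) = \sum_(u | A u v && (f u <= t)) (f u - f v) + \sum_(u | A u v && ~~ (f u <= t)) (f u - f v).
  by move=> v; rewrite (bigID (fun u => f u <= t)).
under eq_bigr => v _ do rewrite sp.
rewrite big_split /=.
rewrite (@antisym_zero _ (fun v => f v <= t) A Asym f) add0r.
rewrite (bigD1 a) //= (bigD1 b) /=; last by rewrite hab -ltNge.
rewrite -addrA lerDl addr_ge0 //.
  apply: sumr_ge0 => u /andP [/andP [_ hu] _].
  by rewrite subr_ge0 ltW // (le_lt_trans ha) // ltNge.
apply: sumr_ge0 => v /andP [hv _]; apply: sumr_ge0 => u /andP [_ hu].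
by rewrite subr_ge0 ltW // (le_lt_trans hv) // ltNge.
Qed.

End Aux.
Unset Implicit Arguments.
Arguments dotp {R d}.

Theorem corollary1 (R : rcfType) (d : nat) (V : finType) (e : rel V)
  (e_sym : symmetric e) (e_irr : irreflexive e)
  (eps : R) (eps_gt0 : 0 < eps) (x : V -> 'rV[R]_d) :
  2 * longest_infl_edge e eps x <=
  \sum_(v : V) #|nbhd e eps x v|%:R * norm2 (movement e eps x v).
Proof.
set lam := longest_infl_edge e eps x.
set Rsum := \sum_(v : V) _.
have rhs0 : 0 <= Rsum.
  by apply: sumr_ge0 => v _; rewrite mulr_ge0 // norm2_ge0.
case: (@longest_cases R d V e eps x) => [|[a [b [hab hl]]]]; first by rewrite -/lam => ->; rewrite mulr0.
rewrite -/lam in hl.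
have [lz|lnz] := eqVneq lam 0; first by rewrite lz mulr0.
have lp : 0 < lam by rewrite lt_def lnz hl /dist2 norm2_ge0.
set w := x b - x a.
have nw : norm2 w = lam by rewrite hl dist2C.
set f := fun v => dotp (x v) w.
have fab : f b - f a = lam ^+ 2.
  rewrite -nw norm2_sqr /f /dotp -sumrB; apply: eq_bigr => i _.
  rewrite /w !mxE; ring.
set Aadj := fun u v => infl_edge e eps x u v || (u == v).
have Asym : symmetric Aadj.
  move=> u v; rewrite /Aadj /infl_edge e_sym dist2C eq_sym //.
set g := fun v => \sum_(u in nbhd e eps x v) (x u - x v).
have hG : forall v, \sum_(u | Aadj u v) (f u - f v) = dotp (g v) w.
  move=> v; rewrite /dotp /g; apply/esym.
  under eq_bigr => i _ do rewrite summxE mulr_suml.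
  rewrite exchange_big /=.
  apply: eq_big => [u|u _]; first by rewrite inE.
  rewrite /f /dotp -sumrB; apply: eq_bigr => i _; rewrite !mxE; ring.
have hN : forall v, #|nbhd e eps x v|%:R * norm2 (movement e eps x v) = norm2 (g v).
  move=> v; rewrite /movement norm2_scale.
  have nz : #|nbhd e eps x v|%:R != 0 :> R.
    rewrite pnatr_eq0 -lt0n card_gt0; apply/set0Pn; exists v.
    by rewrite inE eqxx orbT.
  rewrite ger0_norm ?invr_ge0 ?ler0n // mulrA mulfV // mul1r //.
have fa_lt : f a < f b by rewrite -subr_gt0 fab exprn_gt0.
have Aab : Aadj a b by rewrite /Aadj hab.
have Aba : Aadj b a by rewrite Asym.
have H1 := @cut R V Aadj Asym f (f a) a b (lexx _) fa_lt Aba.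
have H2 := @cut R V Aadj Asym (fun v => - f v) (- f b) b a (lexx _) _ Aab.
rewrite ltrN2 in H2; have {}H2 := H2 fa_lt.
rewrite fab in H1.
have E2 : \sum_(v | - f v <= - f b) \sum_(u | Aadj u v) (- f u - - f v) = - \sum_(v | f b <= f v) \sum_(u | Aadj u v) (f u - f v).
  rewrite -[in RHS]sumrN. apply: eq_big => [v|v _]; first by rewrite lerN2.
  rewrite -[in RHS]sumrN; apply: eq_bigr => u _; rewrite opprB addrC opprK //.
rewrite E2 in H2.
have H2' : lam ^+ 2 <= - \sum_(v | f b <= f v) \sum_(u | Aadj u v) (f u - f v).
  move: H2 fab; set S := \sum_(v | _) _; lra.
set G := fun v => \sum_(u | Aadj u v) (f u - f v).
have Hsum : \sum_(v | f v <= f a) G v - \sum_(v | f b <= f v) G v <= \sum_v `|G v|.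
  rewrite [X in X - _]big_mkcond [X in _ - X]big_mkcond /= -sumrB.
  apply: ler_sum => v _.
  have := ler_norm (G v); have := ler_norm (- G v); rewrite normrN.
  have := normr_ge0 (G v).
  case: ifP => h1; case: ifP => h2 //; try lra.
have Hcs : \sum_v `|G v| <= lam * Rsum.
  rewrite /Rsum mulr_sumr; apply: ler_sum => v _.
  rewrite hN /G hG -nw mulrC; exact: CS.
have : lam * (2 * lam) <= lam * Rsum.
  have : 2 * lam ^+ 2 <= \sum_v `|G v|.
    apply: le_trans Hsum; rewrite /G; lra.
  move=> h; apply: le_trans Hcs; apply: le_trans h; by rewrite expr2 mulrCA.
by rewrite ler_pM2l.
Qed.
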